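(* Let $1<k<n$ and let $\psi:(\mathbb{Q}^{n+1})^*\to(\mathbb{Q}^{n+1})^*$ be the linear map with $\psi(x_i)=-x_{k-i}$ for $1\le i<k$, $\psi(x_k)=\sum_{j=1}^{n+1}x_j$, $\psi(x_i)=-x_{n+1-(i-k)}$ for $k<i\le n$, and $\psi(x_{n+1})=-x_{n+1}$. Then $\psi$ is a linear automorphism, the map $\ker\alpha\mapsto\ker\psi(\alpha)$ permutes the hyperplanes of $\mathcal{A}_{A_{n,k}}$, and $\psi\big(\sum_{j=1}^{n+1}x_j\big)=x_k$; in particular this permutation sends $\ker\big(\sum_{j=1}^{n+1}x_j\big)$ to $\ker x_k$.
   Context: For a finite simple graph $G=(N,E)$ with $N=\{1,\dots,n\}$ and $I\subseteq N$, $G[I]$ denotes the induced subgraph on $I$, and $H_I=\ker\big(\sum_{i\in I}x_i\big)$, where $x_1,\dots,x_n$ are the coordinate functions. The connected subgraph arrangement of $G$ is $\mathcal{A}_G=\{H_I:\emptyset\neq I\subseteq N,\ G[I]\text{ connected}\}$ over $\mathbb{Q}$. The almost path $A_{n,k}$ ($1<k<n$) has vertices $1,\dots,n+1$ and edges $\{i,i+1\}$ ($1\le i<n$) and $\{k,n+1\}$. *)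

(* Defs.v *)
From mathcomp Require Import all_boot all_order all_algebra.
Set Implicit Arguments. Unset Strict Implicit. Unset Printing Implicit Defensive.
Import GRing.Theory Num.Theory.
Local Open Scope ring_scope.

(* Convention: a graph on vertex set {1,...,N} is encoded on the index type
   'I_N, the ordinal a : 'I_N standing for vertex a+1.
   Linear forms on Q^N are row vectors 'rV[rat]_N (coefficients w.r.t. the
   coordinate functions x_1..x_N); points of Q^N are column vectors 'cV[rat]_N;
   a form a evaluated at a point v is a *m v (a 1x1 matrix). *)

(* Induced subgraph G[I] is connected (I assumed nonempty separately). *)
Definition induced_connected (N : nat) (g : rel 'I_N) (I : {set 'I_N}) : bool :=
  [forall x in I, forall y in I,
     connect [rel u v | [&& g u v, u \in I & v \in I]] x y].

Definition chi (N : nat) (I : {set 'I_N}) : 'rV[rat]_N := \row_j (j \in I)%:R.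

Definition same_kernel (N : nat) (a b : 'rV[rat]_N) : Prop :=
  forall v : 'cV[rat]_N, (a *m v == 0) = (b *m v == 0).

(* ker a is a hyperplane of the connected subgraph arrangement A_G. *)
Definition in_csa (N : nat) (g : rel 'I_N) (a : 'rV[rat]_N) : Prop :=
  exists I : {set 'I_N},
    [/\ I != set0, induced_connected g I & same_kernel a (chi I)].

(* Edge relation of the almost path A_{n,k} on vertices 1..n+1 (1-based). *)
Definition almost_path_edge (n k u v : nat) : bool :=
  [|| (v == u.+1) && (1 <= u < n)%N, (u == v.+1) && (1 <= v < n)%N,
      (u == k) && (v == n.+1) | (v == k) && (u == n.+1)].

Definition almost_path (n k : nat) : rel 'I_(n.+1) :=
  fun a b => almost_path_edge n k a.+1 b.+1.

(* Coefficient of x_j in psi(x_i), 1-based indices. *)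
Definition psi_coef (n k i j : nat) : rat :=
  if (1 <= i < k)%N then - (j == (k - i)%N)%:R
  else if i == k then 1
  else if (k < i <= n)%N then - (j == (n.+1 - (i - k))%N)%:R
  else if i == n.+1 then - (j == n.+1)%:R
  else 0.

(* Matrix of psi acting on row vectors of coefficients: psi(a) = a *m psi_mx.
   Row a of psi_mx is psi(x_{a+1}). *)
Definition psi_mx (n k : nat) : 'M[rat]_(n.+1) :=
  \matrix_(a, b) psi_coef n k a.+1 b.+1.

Definition coord_form (N k : nat) : 'rV[rat]_N := \row_j ((j.+1 == k)%:R).

Arguments almost_path : clear implicits.
Arguments psi_mx : clear implicits.
Arguments coord_form : clear implicits.

(* Main.v *)
Require Import Defs.
From mathcomp Require Import all_boot all_order all_algebra zify.
Import GRing.Theory Num.Theory.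
Local Open Scope ring_scope.
Definition sig (n k a : nat) : nat :=
  if (a < k.-1)%N then ((k.-1).-1 - a)%N
  else if (k.-1 < a < n)%N then (n + k.-1 - a)%N else a.

Section S.
Lemma sigL n k a : (a < k.-1)%N -> sig n k a = ((k.-1).-1 - a)%N.
Proof. by rewrite /sig => ->. Qed.
Lemma sigR n k a : (k.-1 < a)%N -> (a < n)%N -> sig n k a = (n + k.-1 - a)%N.
Proof. by rewrite /sig => h1 h2; rewrite ifF ?h1 ?h2 //; lia. Qed.
Lemma sigF n k a : (k.-1 <= n)%N -> (a = k.-1 \/ a = n) -> sig n k a = a.
Proof. by rewrite /sig => h [->|->]; rewrite ifF ?ifF //; lia. Qed.
End S.

Lemma sig_le n k a : (1 < k)%N -> (k < n)%N -> (a <= n)%N -> (sig n k a <= n)%N.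
Proof.
move=> h1 h2 ha.
have : (a < k.-1 \/ a = k.-1 \/ k.-1 < a < n \/ a = n)%N by lia.
case=> [h|[h|[/andP[h h']|h]]].
- rewrite sigL //; lia.
- rewrite sigF //; lia.
- rewrite sigR //; lia.
- rewrite sigF //; lia.
Qed.

Lemma sig_inv n k a : (1 < k)%N -> (k < n)%N -> (a <= n)%N -> sig n k (sig n k a) = a.
Proof.
move=> h1 h2 ha.
have : (a < k.-1 \/ a = k.-1 \/ k.-1 < a < n \/ a = n)%N by lia.
case=> [h|[h|[/andP[h h']|h]]].
- rewrite sigL // sigL //; lia.
- rewrite !sigF //; lia.
- rewrite sigR // sigR //; lia.
- rewrite !sigF //; lia.
Qed.

Lemma sig_c n k a : (1 < k)%N -> (k < n)%N -> (a <= n)%N -> (sig n k a == k.-1) = (a == k.-1).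
Proof.
move=> h1 h2 ha.
have : (a < k.-1 \/ a = k.-1 \/ k.-1 < a < n \/ a = n)%N by lia.
case=> [h|[h|[/andP[h h']|h]]].
- rewrite sigL //; lia.
- rewrite !sigF //; lia.
- rewrite sigR //; lia.
- rewrite !sigF //; lia.
Qed.

Definition sigo n k (j : 'I_n.+1) : 'I_n.+1 := inord (sig n k j).
Definition Cc n k : 'I_n.+1 := inord k.-1.

Lemma sigoK n k : (1 < k)%N -> (k < n)%N -> involutive (sigo n k).
Proof.
move=> h1 h2 j; apply: val_inj.
have hj := ltn_ord j.
have hs : (sig n k j <= n)%N by apply: sig_le; lia.
rewrite /sigo /= (inordK (n':=n) (m:=sig n k j)) ?ltnS // inordK ?sig_inv //; try lia.
Qed.

Lemma val_sigo n k j : (1 < k)%N -> (k < n)%N -> val (sigo n k j) = sig n k j.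
Proof. move=> h1 h2; have hj := ltn_ord j; rewrite /sigo /= inordK // ltnS sig_le //; lia. Qed.

Lemma val_C n k : (1 < k)%N -> (k < n)%N -> val (Cc n k) = k.-1.
Proof. by move=> h1 h2; rewrite /Cc /= inordK //; lia. Qed.

Lemma sigo_C n k j : (1 < k)%N -> (k < n)%N -> (sigo n k j == Cc n k) = (j == Cc n k).
Proof.
move=> h1 h2; rewrite -!(inj_eq val_inj) val_sigo // val_C // sig_c //.
rewrite -ltnS; exact: ltn_ord.
Qed.

Lemma psiE n k (a b : 'I_n.+1) : (1 < k)%N -> (k < n)%N ->
  psi_mx n k a b = if a == Cc n k then 1 else - ((b == sigo n k a)%:R).
Proof.
move=> h1 h2; rewrite mxE /psi_coef -(inj_eq val_inj) val_C // -(inj_eq val_inj) val_sigo //.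
case: a => a ha; case: b => b hb /=.
have : (a < k.-1 \/ a = k.-1 \/ k.-1 < a < n \/ a = n)%N by lia.
case=> [h|[h|[/andP[h h']|h]]].
- rewrite sigL // ifT; last lia. rewrite ifF; last lia.
  congr (- ((nat_of_bool _)%:R)); lia.
- rewrite ifF; last lia. rewrite ifT; last lia. by rewrite h eqxx.
- rewrite sigR // ifF; last lia. rewrite ifF; last lia. rewrite ifT; last lia.
  rewrite ifF; last lia. congr (- ((nat_of_bool _)%:R)); lia.
- rewrite sigF //; try lia. rewrite ifF; last lia. rewrite ifF; last lia. rewrite ifF; last lia.
  rewrite ifT; last lia. rewrite ifF; last lia. congr (- ((nat_of_bool _)%:R)); lia.
Qed.

Lemma sigoCC n k : (1 < k)%N -> (k < n)%N -> sigo n k (Cc n k) = Cc n k.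
Proof. by move=> h1 h2; apply/eqP; rewrite sigo_C. Qed.

Lemma chi_psiE n k (I : {set 'I_n.+1}) j : (1 < k)%N -> (k < n)%N ->
  (chi I *m psi_mx n k) 0 j = if Cc n k \in I then ((j == Cc n k) || (sigo n k j \notin I))%:R
                              else - ((sigo n k j \in I)%:R).
Proof.
move=> h1 h2.
rewrite mxE (bigD1 (Cc n k)) //= psiE // eqxx mulr1.
have E : \sum_(a | a != Cc n k) chi I 0 a * psi_mx n k a j
         = - ((sigo n k j != Cc n k) && (sigo n k j \in I))%:R.
  rewrite (eq_bigr (fun a => - ((a \in I) && (a == sigo n k j))%:R)); last first.
    move=> a ha; rewrite psiE // (negbTE ha) mxE.
    have -> : (j == sigo n k a) = (a == sigo n k j).
      by apply/eqP/eqP => ->; rewrite sigoK.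
    by case: (_ \in _); case: (_ == _); rewrite /= ?mul1r ?mul0r ?oppr0.
  rewrite sumrN; congr (- _).
  case: eqP => [hs|/eqP hs] /=.
    apply: big1 => a ha; case: eqP => [e|]; last by rewrite andbF.
    by rewrite e hs eqxx in ha.
  rewrite (bigD1 (sigo n k j)) //= eqxx andbT big1 ?addr0 // => a /andP[_ ha].
  by rewrite (negbTE ha) andbF.
rewrite E mxE sigo_C //.
case hj: (j == Cc n k).
  move/eqP: hj => ->; rewrite sigoCC //.
  by case: (_ \in _); rewrite /= ?subr0 ?oppr0.
by case: (_ \in I); case: (_ \in I); rewrite /= ?subr0 ?subrr ?sub0r ?oppr0.
Qed.

Lemma row_psi n k a : (1 < k)%N -> (k < n)%N ->
  row a (psi_mx n k) = if a == Cc n k then chi [set: 'I_n.+1] else - chi [set sigo n k a].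
Proof.
move=> h1 h2; apply/rowP => b; rewrite mxE psiE //.
by case: (a == Cc n k); rewrite !mxE ?inE.
Qed.

Lemma psi2 n k : (1 < k)%N -> (k < n)%N -> psi_mx n k *m psi_mx n k = 1%:M.
Proof.
move=> h1 h2; apply/row_matrixP => a; rewrite row_mul row_psi // row1.
case ha: (a == Cc n k).
  apply/rowP => j; rewrite chi_psiE // !in_setT /= orbF mxE; move/eqP: ha => ->; by rewrite eqxx eq_sym.
apply/rowP => j; rewrite mulNmx mxE chi_psiE // !inE mxE.
have -> : (Cc n k == sigo n k a) = false by rewrite eq_sym sigo_C // ha.
rewrite opprK; congr ((nat_of_bool _)%:R).
by rewrite eq_sym (inj_eq (can_inj (sigoK n k h1 h2))).
Qed.
Lemma edgeE n k (u v : 'I_n.+1) : (1 < k)%N -> (k < n)%N ->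
  almost_path n k u v = [|| ((v:nat) == u.+1) && (u.+1 < n)%N, ((u:nat) == v.+1) && (v.+1 < n)%N,
     ((u:nat) == k.-1) && ((v:nat) == n) | ((v:nat) == k.-1) && ((u:nat) == n)].
Proof. by case: u v=>[u hu][v hv] h1 h2; rewrite /almost_path /almost_path_edge /=; lia. Qed.

Lemma connect_map (T : finType) (e1 e2 : rel T) (f : T -> T) x y :
  (forall u v, e1 u v -> e2 (f u) (f v)) -> connect e1 x y -> connect e2 (f x) (f y).
Proof.
move=> hf /connectP [p pth ->]; elim: p x pth => [|z p IH] x /=; first by rewrite connect0.
by move=> /andP[h1 h2]; apply: connect_trans (connect1 (hf _ _ h1)) (IH _ h2).
Qed.

Lemma connect_cut (T : finType) (e : rel T) (P : pred T) x y :
  (forall u v, e u v -> P u = P v) -> connect e x y -> P x = P y.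
Proof.
move=> hf /connectP [p pth ->]; elim: p x pth => [|z p IH] x //=.
by move=> /andP[h1 h2]; rewrite (hf _ _ h1) (IH _ h2).
Qed.

Definition rI n k (J : {set 'I_n.+1}) : rel 'I_n.+1 :=
  [rel u v | [&& almost_path n k u v, u \in J & v \in J]].

Lemma icP n k (J : {set 'I_n.+1}) : reflect (forall x y, x \in J -> y \in J -> connect (rI n k J) x y)
  (induced_connected (almost_path n k) J).
Proof.
apply: (iffP forall_inP) => h x.
  by move=> y hx hy; exact: (forall_inP (h x hx)).
by move=> hx; apply/forall_inP => y hy; exact: h.
Qed.

Lemma rI_sym n k (J : {set 'I_n.+1}) : (1 < k)%N -> (k < n)%N -> symmetric (rI n k J).
Proof.
move=> h1 h2 u v; rewrite /rI /= !edgeE //.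
by case: (u \in J); case: (v \in J); rewrite ?andbF //= !andbT; lia.
Qed.

Lemma walk n k (J : {set 'I_n.+1}) p q : (1 < k)%N -> (k < n)%N -> (p <= q)%N -> (q < n)%N ->
  (forall v, (p <= v <= q)%N -> inord v \in J) -> connect (rI n k J) (inord p) (inord q).
Proof.
move=> h1 h2; elim: q => [|q IH] hpq hq hJ.
  have -> : p = 0%N by lia. exact: connect0.
case: (ltnP p q.+1) => h; last first.
  have -> : p = q.+1 by lia. exact: connect0.
apply: connect_trans (IH _ _ _) (connect1 _); try lia.
  by move=> v hv; apply: hJ; lia.
rewrite /rI /= !hJ ?andbT; try lia.
rewrite edgeE // inordK ?inordK; lia.
Qed.

Lemma convex n k (J : {set 'I_n.+1}) x y z : (1 < k)%N -> (k < n)%N ->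
  induced_connected (almost_path n k) J -> (x <= z <= y)%N -> (y < n)%N ->
  inord x \in J -> inord y \in J -> inord z \in J.
Proof.
move=> h1 h2 /icP hc /andP[hxz hzy] hy hx hyJ; apply/negPn/negP => hz.
have hxy := hc _ _ hx hyJ.
pose P := [pred v : 'I_n.+1 | if (v:nat) == n then (k.-1 < z)%N else (v < z)%N].
have := @connect_cut _ _ P _ _ ^~ hxy.
have hxz' : x != z by apply/eqP => e; rewrite e in hx; rewrite hx in hz.
rewrite /= !inordK; try lia.
case: eqP; first lia. case: eqP; first lia. move=> _ _ H; suff : (x < z)%N = (y < z)%N by lia. apply: H.
move=> u v /and3P[he hu hv].
have hu' : (u:nat) != z by apply/eqP => e; move: hz; rewrite -e inord_val hu.
have hv' : (v:nat) != z by apply/eqP => e; move: hz; rewrite -e inord_val hv.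
move: he; rewrite edgeE // /=; have := ltn_ord u; have := ltn_ord v.
move=> hv1 hu1 he; case: eqP => ?; case: eqP => ?; lia.
Qed.

Lemma sig_cases n k a : (1 < k)%N -> (k < n)%N -> (a <= n)%N -> a != k.-1 ->
  ((a < k.-1)%N /\ sig n k a = ((k.-1).-1 - a)%N) \/
  ((k.-1 < a < n)%N /\ sig n k a = (n + k.-1 - a)%N) \/ (a = n /\ sig n k a = n).
Proof.
move=> h1 h2 ha hc.
have : (a < k.-1 \/ k.-1 < a < n \/ a = n)%N by lia.
case=> [h|[/andP[h h']|h]].
- by left; rewrite sigL.
- by right; left; rewrite sigR ?h ?h'.
- by right; right; rewrite sigF; [|lia|right].
Qed.

Lemma sigo_inord n k v : (1 < k)%N -> (k < n)%N -> (v <= n)%N ->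
  sigo n k (inord v) = inord (sig n k v).
Proof. by move=> h1 h2 hv; rewrite /sigo inordK. Qed.

Local Open Scope nat_scope.
Lemma sig_edge n k u v : (1 < k)%N -> (k < n)%N -> (u <= n)%N -> (v <= n)%N ->
  u != k.-1 -> v != k.-1 ->
  [|| (v == u.+1) && (u.+1 < n), (u == v.+1) && (v.+1 < n),
     (u == k.-1) && (v == n) | (v == k.-1) && (u == n)] ->
  [|| (sig n k v == (sig n k u).+1) && ((sig n k u).+1 < n), (sig n k u == (sig n k v).+1) && ((sig n k v).+1 < n),
     (sig n k u == k.-1) && (sig n k v == n) | (sig n k v == k.-1) && (sig n k u == n)].
Proof.
move=> h1 h2 hu hv hu' hv'.
case/or4P => /andP[/eqP e1 e2]; try lia; subst.
- have : (u.+1 < k.-1 \/ k.-1 < u)%N by lia.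
  case=> h.
  + rewrite (sigL n k u) ?(sigL n k u.+1); lia.
  + rewrite (sigR n k u) ?(sigR n k u.+1); lia.
- have : (v.+1 < k.-1 \/ k.-1 < v)%N by lia.
  case=> h.
  + rewrite (sigL n k v) ?(sigL n k v.+1); lia.
  + rewrite (sigR n k v) ?(sigR n k v.+1); lia.
Qed.

Local Open Scope ring_scope.

Lemma csa_image n k (I : {set 'I_n.+1}) : (1 < k)%N -> (k < n)%N -> I != set0 ->
  induced_connected (almost_path n k) I ->
  exists J : {set 'I_n.+1}, [/\ J != set0, induced_connected (almost_path n k) J &
     same_kernel (chi I *m psi_mx n k) (chi J)].
Proof.
move=> h1 h2 hI0 hIc.
have hc := hIc; move/icP: hc => hc.
case hC: (Cc n k \in I).
- set J := [set j | (j == Cc n k) || (sigo n k j \notin I)].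
  exists J.
  have E : chi I *m psi_mx n k = chi J.
    by apply/rowP => j; rewrite chi_psiE // hC !mxE inE.
  have CJ : Cc n k \in J by rewrite inE eqxx.
  have toC : forall j, j \in J -> connect (rI n k J) j (Cc n k).
    move=> j hj; have hjn := ltn_ord j.
    case: (eqVneq j (Cc n k)) => [->|hjC]; first exact: connect0.
    have hs : sigo n k j \notin I by move: hj; rewrite inE (negbTE hjC).
    have hjc : (j : nat) != k.-1.
      by apply: contra hjC => /eqP e; apply/eqP/val_inj; rewrite val_C.
    have : (j < k.-1 \/ k.-1 < j < n \/ j = n :> nat)%N by lia.
    case=> [h|[/andP[h h']|h]].
    + rewrite -(inord_val j) /Cc; apply: walk; try lia.
      move=> v hv; rewrite inE.
      case: (ltnP v k.-1) => hvc; last first.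
        by apply/orP; left; apply/eqP/val_inj; rewrite /Cc /= !inordK //; lia.
      apply/orP; right; apply/negP => hvI; move/negP: hs; apply.
      rewrite sigo_inord in hvI; try lia.
      rewrite /sigo; apply: (convex n k I (sig n k v) (k.-1) (sig n k j) h1 h2 hIc) => //; try lia.
      by rewrite !sigL //; lia.
    + rewrite (sym_connect_sym (rI_sym n k J h1 h2)) -(inord_val j) /Cc; apply: walk; try lia.
      move=> v hv; rewrite inE.
      case: (eqVneq v k.-1) => [->|hvc]; first by rewrite eqxx.
      apply/orP; right; apply/negP => hvI; move/negP: hs; apply.
      rewrite sigo_inord in hvI; try lia.
      rewrite /sigo; apply: (convex n k I (k.-1) (sig n k v) (sig n k j) h1 h2 hIc) => //; try lia.
      * by rewrite !sigR //; lia.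
      * by rewrite sigR //; lia.
    + apply: connect1; rewrite /rI /= hj CJ andbT edgeE // val_C //; lia.
  split.
  + by apply/set0Pn; exists (Cc n k).
  + apply/icP => x y hx hy.
    apply: connect_trans (toC _ hx) _.
    by rewrite (sym_connect_sym (rI_sym n k J h1 h2)); exact: toC.
  + by rewrite E => v.
- set J := [set j | sigo n k j \in I].
  exists J.
  have E : chi I *m psi_mx n k = - chi J.
    by apply/rowP => j; rewrite chi_psiE // hC !mxE inE.
  split.
  + case/set0Pn: hI0 => x hx; apply/set0Pn; exists (sigo n k x).
    by rewrite inE sigoK.
  + apply/icP => x y hx hy.
    rewrite -(sigoK n k h1 h2 x) -(sigoK n k h1 h2 y).
    apply: (connect_map _ (rI n k I)); last by apply: hc; [move: hx | move: hy]; rewrite inE.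
    move=> u v /and3P[he hu hv].
    rewrite /rI /= !inE !sigoK // hu hv !andbT.
    have hu' : (u : nat) != k.-1.
      by apply/eqP => e; move: hu; rewrite (_ : u = Cc n k) ?hC //; apply/val_inj; rewrite val_C.
    have hv' : (v : nat) != k.-1.
      by apply/eqP => e; move: hv; rewrite (_ : v = Cc n k) ?hC //; apply/val_inj; rewrite val_C.
    move: he; rewrite !edgeE // !val_sigo //.
    have hun := ltn_ord u; have hvn := ltn_ord v.
    by apply: sig_edge => //; rewrite -ltnS.
  + by rewrite E => v; rewrite mulNmx oppr_eq0.
Qed.

Theorem proposition5p3 (n k : nat) (hk1 : (1 < k)%N) (hkn : (k < n)%N) :
  let psi := psi_mx n k in
  let G := almost_path n k in
  (* psi is a linear automorphism *)
  psi \in unitmx /\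
  (* ker a |-> ker psi(a) maps hyperplanes of A_G to hyperplanes of A_G *)
  (forall a, in_csa G a -> in_csa G (a *m psi)) /\
  (* ... injectively ... *)
  (forall a b, in_csa G a -> in_csa G b ->
     same_kernel (a *m psi) (b *m psi) -> same_kernel a b) /\
  (* ... and surjectively *)
  (forall b, in_csa G b -> exists a, in_csa G a /\ same_kernel (a *m psi) b) /\
  (* psi (x_1 + ... + x_{n+1}) = x_k, hence ker(sum x_j) |-> ker x_k *)
  chi [set: 'I_(n.+1)] *m psi = coord_form (n.+1) k /\
  same_kernel (chi [set: 'I_(n.+1)] *m psi) (coord_form (n.+1) k).
Proof.
move=> psi G.
have P2 : psi *m psi = 1%:M := psi2 n k hk1 hkn.
have part2 : forall a, in_csa G a -> in_csa G (a *m psi).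
  move=> a [I [hI0 hIc hk]].
  have [J [hJ0 hJc hJk]] := csa_image n k I hk1 hkn hI0 hIc.
  exists J; split => // v; rewrite -mulmxA hk mulmxA; exact: hJk.
have hchi : chi [set: 'I_(n.+1)] *m psi = coord_form (n.+1) k.
  apply/rowP => j; rewrite chi_psiE // !in_setT /= orbF !mxE.
  congr ((nat_of_bool _)%:R); rewrite -(inj_eq val_inj) val_C //; case: j => j hj /=; lia.
split; first by case: (mulmx1_unit P2).
split; first exact: part2.
split.
  move=> a b _ _ h v.
  have K : forall c : 'rV[rat]_(n.+1), c *m psi *m (psi *m v) = c *m v.
    by move=> c; rewrite mulmxA -(mulmxA c) P2 mulmx1.
  by have := h (psi *m v); rewrite !K.
split.
  move=> b hb; exists (b *m psi); split; first exact: part2.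
  by rewrite -mulmxA P2 mulmx1 => v.
by split => //; rewrite hchi => v.
Qed.
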